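(* Let $\Gamma=((V,E),m)$ be an EAFC system with $V$ finite, $G=G_\Gamma$, and $Y\subseteq G$. Then $N_G(Y):=\{g\in G \mid gYg^{-1}=Y\}$ is contained in $N_G(P(Y))$.
   Context: An Artin–Tits system $\Gamma=((V,E),m)$ consists of a simplicial graph $(V,E)$ and a labelling $m\colon E\to\{2,3,\dots\}$; $G_\Gamma=\langle V \mid \mathrm{prod}(u,v,m(\{u,v\}))=\mathrm{prod}(v,u,m(\{u,v\}))\ \forall \{u,v\}\in E\rangle$, where $\mathrm{prod}(u,v,n)$ is the prefix of length $n$ of $uvuv\cdots$. An EAFC system has all labels even and among any three pairwise adjacent vertices at least two of the three edges have label $2$. For $S\subseteq V$, $G_S=\langle S\rangle$; a parabolic subgroup is a subgroup $gG_Sg^{-1}$ with $g\in G_\Gamma$, $S\subseteq V$. $P(Y)$ is the intersection of all parabolic subgroups of $G_\Gamma$ containing $Y$. *)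

(* Defs.v *)
From mathcomp Require Import all_boot.
From Stdlib Require Import Relation_Operators.
Set Implicit Arguments. Unset Strict Implicit. Unset Printing Implicit Defensive.

(* An Artin-Tits system on a finite vertex set V: a simple graph given by a
   symmetric irreflexive relation [adj], and labels [m u v] on edges. *)
Definition artin_tits_system (V : finType) (adj : rel V) (m : V -> V -> nat) :=
  [/\ forall u, ~~ adj u u,
      forall u v, adj u v -> adj v u,
      forall u v, adj u v -> m u v = m v u
    & forall u v, adj u v -> 2 <= m u v].

Definition EAFC (V : finType) (adj : rel V) (m : V -> V -> nat) :=
  (forall u v, adj u v -> ~~ odd (m u v)) /\
  (forall u v w, adj u v -> adj v w -> adj u w ->
     [|| (m u v == 2) && (m v w == 2),
         (m u v == 2) && (m u w == 2) |
         (m v w == 2) && (m u w == 2)]).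

(* Words in the generators and their inverses: (x, false) = x, (x, true) = x^-1. *)
Definition word (V : Type) := seq (V * bool).

Definition winv (V : Type) (w : word V) : word V :=
  rev (map (fun p => (p.1, ~~ p.2)) w).

Definition altprod (V : Type) (u v : V) (n : nat) : word V :=
  mkseq (fun i => if odd i then (v, false) else (u, false)) n.

Inductive artin_step (V : finType) (adj : rel V) (m : V -> V -> nat)
  : word V -> word V -> Prop :=
| st_free (a b : word V) (x : V) (s : bool) :
    artin_step adj m (a ++ (x, s) :: (x, ~~ s) :: b) (a ++ b)
| st_rel (a b : word V) (u v : V) :
    adj u v ->
    artin_step adj m (a ++ altprod u v (m u v) ++ b) (a ++ altprod v u (m u v) ++ b).

(* Two words represent the same element of G_Gamma. *)
Definition artin_eq (V : finType) (adj : rel V) (m : V -> V -> nat) :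
  word V -> word V -> Prop := clos_refl_sym_trans _ (artin_step adj m).

Definition wconj (V : Type) (g y : word V) : word V := g ++ y ++ winv g.

(* Subsets of G are given by predicates on words (a word lies in the subset
   as an element of G iff it is artin_eq to a word satisfying the predicate).
   [normalizes g Y] : g Y g^-1 = Y as subsets of G. *)
Definition normalizes (V : finType) (adj : rel V) (m : V -> V -> nat)
  (g : word V) (Y : word V -> Prop) : Prop :=
  (forall y, Y y -> exists y', Y y' /\ artin_eq adj m (wconj g y) y') /\
  (forall y, Y y -> exists y', Y y' /\ artin_eq adj m y (wconj g y')).

Definition in_parabolic (V : finType) (adj : rel V) (m : V -> V -> nat)
  (g : word V) (S : {set V}) (h : word V) : Prop :=
  exists w : word V, all (fun p => p.1 \in S) w /\ artin_eq adj m h (wconj g w).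

(* P(Y): intersection of all parabolic subgroups containing Y. *)
Definition parabolic_closure (V : finType) (adj : rel V) (m : V -> V -> nat)
  (Y : word V -> Prop) : word V -> Prop :=
  fun h => forall (g : word V) (S : {set V}),
    (forall y, Y y -> in_parabolic adj m g S y) -> in_parabolic adj m g S h.

(* Main.v *)
Require Import Defs.
From mathcomp Require Import all_boot.
From Stdlib Require Import Relation_Operators.
Set Implicit Arguments. Unset Strict Implicit.

Section W.
Variables (V : finType) (adj : rel V) (m : V -> V -> nat).
Local Notation AE := (artin_eq adj m).

Lemma AE_refl x : AE x x. Proof. exact: rst_refl. Qed.
Lemma AE_sym x y : AE x y -> AE y x. Proof. exact: rst_sym. Qed.
Lemma AE_trans x y z : AE x y -> AE y z -> AE x z. Proof. exact: rst_trans. Qed.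

Lemma step_ctx (c d a b : word V) : artin_step adj m a b -> artin_step adj m (c ++ a ++ d) (c ++ b ++ d).
Proof.
case=> [a' b' x s|a' b' u v huv].
- have -> : c ++ (a' ++ [:: (x, s), (x, ~~ s) & b']) ++ d
            = (c ++ a') ++ [:: (x, s), (x, ~~ s) & b' ++ d] by rewrite !catA -!catA.
  have -> : c ++ (a' ++ b') ++ d = (c ++ a') ++ (b' ++ d) by rewrite !catA.
  exact: st_free.
- have -> : c ++ (a' ++ altprod u v (m u v) ++ b') ++ d
            = (c ++ a') ++ altprod u v (m u v) ++ (b' ++ d) by rewrite !catA.
  have -> : c ++ (a' ++ altprod v u (m u v) ++ b') ++ d
            = (c ++ a') ++ altprod v u (m u v) ++ (b' ++ d) by rewrite !catA.
  exact: st_rel.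
Qed.

Lemma AE_ctx (c d a b : word V) : AE a b -> AE (c ++ a ++ d) (c ++ b ++ d).
Proof.
elim=> [x y s|x|x y _ IH|x y z _ IH1 _ IH2].
- apply: rst_step; exact: step_ctx.
- exact: AE_refl.
- exact: AE_sym.
- exact: AE_trans IH2.
Qed.

Lemma winv_cons (x : V) s (a : word V) : winv ((x, s) :: a) = winv a ++ [:: (x, ~~ s)].
Proof. by rewrite /winv /= rev_cons cats1. Qed.

Lemma winv_cat (a b : word V) : winv (a ++ b) = winv b ++ winv a.
Proof. by rewrite /winv map_cat rev_cat. Qed.

Lemma winvK (a : word V) : winv (winv a) = a.
Proof.
rewrite /winv map_rev revK -map_comp.
rewrite -[RHS]map_id; apply: eq_map => -[x s] /=; by rewrite negbK.
Qed.

Lemma cancel_r (a : word V) : AE (a ++ winv a) [::].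
Proof.
elim: a => [|[x s] a IH] /=; first exact: AE_refl.
rewrite winv_cons catA.
apply: AE_trans (_ : AE ([:: (x, s)] ++ [::] ++ [:: (x, ~~ s)]) [::]).
- have := AE_ctx [:: (x, s)] [:: (x, ~~ s)] IH; by rewrite /= -catA.
- apply: rst_step. exact: (@st_free _ adj m [::] [::] x s).
Qed.

Lemma cancel_l (a : word V) : AE (winv a ++ a) [::].
Proof. have := cancel_r (winv a); by rewrite winvK. Qed.

Lemma wconj_cat (a b x : word V) : wconj (a ++ b) x = wconj a (wconj b x).
Proof. by rewrite /wconj winv_cat !catA. Qed.

Lemma wconjK (g x : word V) : AE (wconj g (wconj (winv g) x)) x.
Proof.
rewrite -wconj_cat /wconj winv_cat winvK.
apply: AE_trans (_ : AE ([::] ++ x ++ (g ++ winv g)) _).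
- have := AE_ctx [::] (x ++ (g ++ winv g)) (cancel_r g); by rewrite /=.
- have := AE_ctx x [::] (cancel_r g); by rewrite /= !cats0.
Qed.

Lemma wconjK' (g x : word V) : AE (wconj (winv g) (wconj g x)) x.
Proof. have := wconjK (winv g) x; by rewrite winvK. Qed.

Lemma AE_wconj (g a b : word V) : AE a b -> AE (wconj g a) (wconj g b).
Proof. exact: AE_ctx. Qed.
End W.

Theorem lemma2p4 (V : finType) (adj : rel V) (m : V -> V -> nat)
  (hAT : artin_tits_system adj m) (hE : EAFC adj m)
  (Y : word V -> Prop) (g : word V) :
  normalizes adj m g Y -> normalizes adj m g (parabolic_closure adj m Y).
Proof.
move=> [N1 N2]; split=> h Hh.
- exists (wconj g h); split; last exact: AE_refl.
  move=> g' S HY.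
  have [w [Hw Hhw]] : in_parabolic adj m (winv g ++ g') S h.
    apply: Hh => y Yy.
    have [y' [Yy' E]] := N1 y Yy.
    have [w [Hw E']] := HY y' Yy'.
    exists w; split=> //.
    rewrite wconj_cat.
    apply: AE_trans (AE_sym ((@wconjK' _ adj m g y))) _.
    apply: AE_wconj; exact: AE_trans E E'.
  exists w; split=> //.
  apply: AE_trans (AE_wconj g Hhw) _.
  rewrite wconj_cat; exact: wconjK.
- exists (wconj (winv g) h); split; last exact: AE_sym ((@wconjK _ adj m g h)).
  move=> g' S HY.
  have [w [Hw Hhw]] : in_parabolic adj m (g ++ g') S h.
    apply: Hh => y Yy.
    have [y' [Yy' E]] := N2 y Yy.
    have [w [Hw E']] := HY y' Yy'.
    exists w; split=> //.
    rewrite wconj_cat.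
    apply: AE_trans E _. exact: AE_wconj.
  exists w; split=> //.
  apply: AE_trans (AE_wconj (winv g) Hhw) _.
  rewrite wconj_cat; exact: wconjK'.
Qed.
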